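(* Let $d,\mathfrak d,\mathfrak L\in\mathbb N$, $L\in\mathbb R$, $u\in[-\infty,\infty)$, $v\in(u,\infty]$, let $D\subseteq\mathbb R^d$ be a set, let $f\colon D\to[u,v]\cap\mathbb R$ satisfy $|f(x)-f(y)|\le L\sum_{i=1}^d|x_i-y_i|$ for all $x,y\in D$, let $\mathcal M\subseteq D$ satisfy $|\mathcal M|\in\{2,3,\dots\}$, let $l=(l_0,\dots,l_{\mathfrak L})\in\mathbb N^{\mathfrak L+1}$ satisfy $\mathfrak L\ge|\mathcal M|+1$, $\sum_{i=1}^{\mathfrak L}l_i(l_{i-1}+1)\le\mathfrak d$, $l_0=d$, $l_{\mathfrak L}=1$, $l_1\ge 2d|\mathcal M|$, $l_k\ge 2|\mathcal M|-2k+3$ for all $k\in\{2,\dots,|\mathcal M|\}$, and $l_i\ge 2$ for all $i\in\mathbb N\cap(|\mathcal M|,\mathfrak L)$. Then there exists $\theta\in\mathbb R^{\mathfrak d}$ such that $\|\theta\|_\infty\le\max\{1,L,\sup_{z\in\mathcal M}\|z\|_\infty,2\sup_{z\in\mathcal M}|f(z)|\}$ and $$\sup_{x\in D}|f(x)-\mathscr N^{\theta,l}_{u,v}(x)|\le 2L\Bigl[\sup_{x\in D}\Bigl(\inf_{y\in\mathcal M}\sum_{i=1}^d|x_i-y_i|\Bigr)\Bigr].$$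
   Context: $\|\cdot\|_\infty$ is the maximum norm. For $r,s\in\mathbb N$, $k\in\mathbb N_0$, $\theta\in\mathbb R^{\mathfrak d}$ with $\mathfrak d\ge k+rs+r$, $\mathcal A^{\theta,k}_{r,s}\colon\mathbb R^s\to\mathbb R^r$ has $i$-th component $x\mapsto\sum_{j=1}^s\theta_{k+(i-1)s+j}x_j+\theta_{k+rs+i}$. $\mathfrak C_{u,v,n}$ applies $y\mapsto\max\{u,\min\{y,v\}\}$ componentwise on $\mathbb R^n$ and $\mathfrak R_n$ applies $y\mapsto\max\{y,0\}$ componentwise. For $l=(l_0,\dots,l_{\mathfrak L})$ with $\mathfrak d\ge\sum_kl_k(l_{k-1}+1)$ and $s_k=\sum_{j=1}^kl_j(l_{j-1}+1)$, $\mathscr N^{\theta,l}_{u,v}=\mathfrak C_{u,v,l_{\mathfrak L}}\circ\mathcal A^{\theta,s_{\mathfrak L-1}}_{l_{\mathfrak L},l_{\mathfrak L-1}}\circ\mathfrak R_{l_{\mathfrak L-1}}\circ\cdots\circ\mathfrak R_{l_1}\circ\mathcal A^{\theta,0}_{l_1,l_0}\colon\mathbb R^{l_0}\to\mathbb R^{l_{\mathfrak L}}$. *)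

(* Defs.v *)
From HB Require Import structures.
From mathcomp Require Import all_boot all_order all_algebra.
From mathcomp Require Import all_classical all_reals all_analysis.
Set Implicit Arguments. Unset Strict Implicit. Unset Printing Implicit Defensive.
Import Order.TTheory GRing.Theory Num.Theory.
Local Open Scope ring_scope.

Section Defs.
Variable R : realType.

(* extend a finite vector / parameter vector by zero to nat-indexed sequences
   (0-based indexing: component j of the paper is index j-1 here) *)
Definition ext (n : nat) (g : 'I_n -> R) : nat -> R :=
  fun j => odflt 0 (omap g (insub j)).

Definition affine (th : nat -> R) (k r s : nat) (x : nat -> R) : nat -> R :=
  fun i => \sum_(j < s) th (k + i * s + j)%N * x j + th (k + r * s + i)%N.

Definition relu (x : nat -> R) : nat -> R := fun i => Num.max (x i) 0.

Definition clip (u v : \bar R) (y : R) : R := fine (Order.max u (Order.min y%:E v)).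

(* realization of the hidden and output layers: k = offset, prev = previous width *)
Fixpoint layers (th : nat -> R) (u v : \bar R) (k prev : nat) (rest : seq nat)
  (x : nat -> R) : nat -> R :=
  match rest with
  | [::] => x
  | [:: n] => fun i => clip u v (affine th k n prev x i)
  | n :: rest' => layers th u v (k + n * (prev + 1))%N n rest'
                    (relu (affine th k n prev x))
  end.

(* N^{theta,l}_{u,v} for networks with one-dimensional output (l_L = 1),
   applied to x in R^d (d = l_0); returns the unique output component *)
Definition realization (dd d : nat) (th : 'I_dd -> R) (l : seq nat)
  (u v : \bar R) (x : 'rV[R]_d) : R :=
  match l with
  | [::] => 0
  | l0 :: rest => layers (ext th) u v 0 l0 rest (ext (fun j => x ord0 j)) 0%N
  end.

Definition dist1 (d : nat) (x y : 'rV[R]_d) : R :=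
  \sum_(i < d) `|x ord0 i - y ord0 i|.

Definition normInf (d : nat) (x : 'rV[R]_d) : R :=
  \big[Num.max/0]_(i < d) `|x ord0 i|.

End Defs.

(* Main.v *)
Require Import Defs.
From HB Require Import structures.
From mathcomp Require Import all_boot all_order all_algebra.
From mathcomp Require Import all_classical all_reals all_analysis.
From mathcomp Require Import zify ring lra.
From Stdlib Require Import Lia.
Import Order.TTheory GRing.Theory Num.Theory.
Local Open Scope ring_scope.
Local Open Scope classical_set_scope.

Section Generic.
Variable R : realType.
Variables (u v : \bar R).
Implicit Types (W : nat -> nat -> nat -> R) (B : nat -> nat -> R).

Fixpoint mkth W B (k prev : nat) (ls : seq nat) (p : nat) : R :=
  match ls with
  | [::] => 0
  | n :: rest => if (p < n * prev)%N then W k (p %/ prev)%N (p %% prev)%N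
                 else if (p < n * (prev + 1))%N then B k (p - n * prev)%N
                 else mkth W B k.+1 n rest (p - n * (prev + 1))%N
  end.

Fixpoint psize (prev : nat) (ls : seq nat) : nat :=
  match ls with
  | [::] => 0%N
  | n :: rest => (n * (prev + 1) + psize n rest)%N
  end.

Definition lin W B k prev (z : nat -> R) (i : nat) : R :=
  \sum_(j < prev) W k i j * z j + B k i.

Fixpoint neval W B (k prev : nat) (ls : seq nat) (z : nat -> R) : nat -> R :=
  match ls with
  | [::] => z
  | [:: n] => fun i => clip u v (lin W B k prev z i)
  | n :: rest => neval W B k.+1 n rest (relu (lin W B k prev z))
  end.

Lemma mkth_beyond W B ls : forall k prev p, (psize prev ls <= p)%N ->
  mkth W B k prev ls p = 0.
Proof.
elim: ls => [//|n rest IH] k prev p /= hp.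
have h1 : (p < n * prev)%N = false by apply/negbTE; rewrite -leqNgt; nia.
have h2 : (p < n * (prev + 1))%N = false by apply/negbTE; rewrite -leqNgt; nia.
rewrite h1 h2 IH //; lia.
Qed.

Lemma lin_ext W B k prev z1 z2 : (forall j, (j < prev)%N -> z1 j = z2 j) ->
  lin W B k prev z1 = lin W B k prev z2.
Proof.
move=> h; apply: funext => i; rewrite /lin; congr (_ + _).
by apply: eq_bigr => j _; rewrite h.
Qed.

Lemma eval_ext W B ls k prev z1 z2 : ls != [::] ->
  (forall j, (j < prev)%N -> z1 j = z2 j) ->
  neval W B k prev ls z1 = neval W B k prev ls z2.
Proof.
case: ls => [//|n [|n' r]] _ h /=; by rewrite (lin_ext _ _ _ _ _ _ h).
Qed.

Lemma layers_eval W B ls : forall off k prev x th,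
  (forall p, th (off + p)%N = mkth W B k prev ls p) ->
  forall i, (i < last prev ls)%N ->
  layers th u v off prev ls x i = neval W B k prev ls x i.
Proof.
have haff : forall off k prev n rest x th,
  (forall p, th (off + p)%N = mkth W B k prev (n :: rest) p) ->
  forall i, (i < n)%N -> affine th off n prev x i = lin W B k prev x i.
  move=> off k prev n rest x th hth i hi; rewrite /affine /lin; congr (_ + _).
    apply: eq_bigr => j _; congr (_ * _).
    have hp : (0 < prev)%N by case: j => j /= hj; lia.
    rewrite -addnA hth /=.
    have -> : (i * prev + j < n * prev)%N.
      have := ltn_ord j; move=> hj.
      have : (i.+1 * prev <= n * prev)%N by rewrite leq_mul2r hi orbT.
      rewrite mulSn; lia.
    rewrite divnMDl // modnMDl divn_small // modn_small //; by rewrite addn0.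
  rewrite -addnA hth /=.
  have -> : (n * prev + i < n * prev)%N = false by apply/negbTE; rewrite -leqNgt leq_addr.
  have -> : (n * prev + i < n * (prev + 1))%N by rewrite mulnDr muln1 ltn_add2l.
  by rewrite addKn.
elim: ls => [|n rest IH] off k prev x th hth i hi //=.
case: rest IH hth hi => [|n' r] IH hth hi.
  by rewrite (haff _ _ _ _ _ _ _ hth).
set rest := n' :: r.
rewrite (IH (off + n * (prev + 1))%N k.+1); last first.
- by [].
- move=> p; rewrite -addnA hth /=.
  have -> : (n * (prev + 1) + p < n * prev)%N = false.
    by apply/negbTE; rewrite -leqNgt mulnDr; lia.
  have -> : (n * (prev + 1) + p < n * (prev + 1))%N = false.
    by apply/negbTE; rewrite -leqNgt; lia.
  by rewrite addKn.
congr (_ _); apply: eval_ext => // j hj.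
by rewrite /relu (haff _ _ _ _ _ _ _ hth).
Qed.

End Generic.
Arguments lin {R}. Arguments mkth {R}. Arguments neval {R}.

Lemma eval_cons2 (R : realType) u v W B k prev n n' r (z : nat -> R) :
  neval u v W B k prev (n :: n' :: r) z = neval u v W B k.+1 n (n' :: r) (relu (lin W B k prev z)).
Proof. by []. Qed.

Lemma psize_sum (l : seq nat) n : forall k, size l = (k + n).+1 ->
  psize (nth 0%N l k) (drop k.+1 l) =
  (\sum_(k.+1 <= i < size l) nth 0 l i * (nth 0 l i.-1 + 1))%N.
Proof.
elim: n => [|n IH] k hk.
  rewrite drop_oversize; last by rewrite hk addn0.
  by rewrite big_geq // hk addn0.
rewrite (drop_nth 0%N); last by rewrite hk; lia.
rewrite /= IH; last by rewrite hk; lia.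
by rewrite (@big_ltn _ _ _ k.+1) //= hk; lia.
Qed.

Lemma mkth_prop (R : realType) (P : R -> Prop) W B : (forall k i j, P (W k i j)) ->
  (forall k i, P (B k i)) -> P 0 -> forall ls k prev p, P (mkth W B k prev ls p).
Proof.
move=> hW hB h0; elim=> [//|n rest IH] k prev p /=.
by case: ifP => _; [|case: ifP].
Qed.


Section Helpers.
Variable R : realType.

Lemma ext_ord n (g : 'I_n -> R) (i : 'I_n) : ext g i = g i.
Proof. by rewrite /ext valK. Qed.

Lemma sum_ind n q (F : nat -> R) : (q < n)%N ->
  \sum_(j < n) ((j : nat) == q)%:R * F j = F q.
Proof.
move=> hq; rewrite (bigD1 (Ordinal hq)) //= eqxx mul1r big1 ?addr0 //.
move=> j hj; have -> : ((j : nat) == q) = false.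
  by apply/negbTE; apply: contra hj => /eqP h; apply/eqP; apply: val_inj.
by rewrite mul0r.
Qed.

Lemma relu_abs (a : R) : Num.max a 0 + Num.max (- a) 0 = `|a|.
Proof.
case: (lerP 0 a) => ha.
  by rewrite (max_r (_ : - a <= 0)) ?addr0 ?ger0_norm // oppr_le0.
by rewrite (max_l (_ : 0 <= - a)) ?add0r ?ltr0_norm // oppr_ge0 ltW.
Qed.

Lemma relu_diff (a : R) : Num.max a 0 - Num.max (- a) 0 = a.
Proof.
case: (lerP 0 a) => ha.
  by rewrite (max_r (_ : - a <= 0)) ?subr0 // oppr_le0.
by rewrite (max_l (_ : 0 <= - a)) ?sub0r ?opprK // oppr_ge0 ltW.
Qed.

Lemma max_shift (s a : R) : a + Num.max (s - a) 0 = Num.max s a.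
Proof.
case: (lerP a s) => h.
  rewrite max_l ?subr_ge0 //; ring.
rewrite max_r ?addr0 // subr_le0 ltW //.
Qed.

Lemma relu_pos (a : R) : 0 <= a -> Num.max a 0 = a.
Proof. by move=> h; rewrite max_l. Qed.

Lemma sum_block (F : nat -> R) (c Mm N r : nat) : (r < Mm)%N -> (Mm * c <= N)%N ->
  \sum_(j < N) (((j < Mm * c) && (j %/ c == r))%N)%:R * F j = \sum_(q < c) F (r * c + q)%N.
Proof.
move=> hr hN.
case: (posnP c) => [->|hc].
  by rewrite big_ord0 big1 // => j _; rewrite muln0 ltn0 mul0r.
rewrite -(big_mkord xpredT (fun j => (((j < Mm * c) && (j %/ c == r))%N)%:R * F j)).
rewrite (@big_cat_nat _ _ _ (r * c)) //=; last by rewrite (leq_trans _ hN) // leq_mul2r ltnW ?orbT.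
have hrc : (r * c + c <= N)%N.
  have : (r.+1 * c <= Mm * c)%N by rewrite leq_mul2r hr orbT.
  rewrite mulSn; lia.
rewrite [X in _ + X](@big_cat_nat _ _ _ (r * c + c)) ?leq_addr //=.
rewrite big1_seq; last first.
  move=> j /andP [_]; rewrite mem_index_iota => /andP [_ hj].
  have : (j %/ c < r)%N by rewrite ltn_divLR.
  by case: eqP => [->|]; rewrite ?ltnn ?andbF ?mul0r.
rewrite add0r [X in _ + X]big1_seq ?addr0; last first.
  move=> j /andP [_]; rewrite mem_index_iota => /andP [hj _].
  have : (r < j %/ c)%N by rewrite leq_divRL // mulSn addnC.
  by case: eqP => [->|]; rewrite ?ltnn ?andbF ?mul0r.
rewrite -{1}(add0n (r * c)%N) big_addn.
have -> : (r * c + c - r * c = c)%N by lia.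
rewrite big_mkord; apply: eq_bigr => q _.
have hq := ltn_ord q.
have -> : ((q + r * c) %/ c = r)%N by rewrite addnC divnMDl // divn_small // addn0.
have -> : (q + r * c < Mm * c)%N.
  have : (r.+1 * c <= Mm * c)%N by rewrite leq_mul2r hr orbT.
  rewrite mulSn; lia.
by rewrite eqxx mul1r addnC.
Qed.

Lemma sum3 n (F : nat -> R) : (3 <= n)%N ->
  \sum_(j < n) ((((j : nat) == 0)%N)%:R - (((j : nat) == 1)%N)%:R + (((j : nat) == 2)%N)%:R) * F j
  = F 0%N - F 1%N + F 2%N.
Proof.
move=> hn; under eq_bigr do rewrite !mulrDl !mulNr.
by rewrite !big_split /= sumrN !sum_ind //; lia.
Qed.

Lemma sum2 n (F : nat -> R) : (2 <= n)%N ->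
  \sum_(j < n) ((((j : nat) == 0)%N)%:R - (((j : nat) == 1)%N)%:R) * F j
  = F 0%N - F 1%N.
Proof.
move=> hn; under eq_bigr do rewrite !mulrDl !mulNr.
by rewrite !big_split /= sumrN !sum_ind //; lia.
Qed.

Lemma sum_scale n (c : R) (G F : nat -> R) :
  \sum_(j < n) (c * G j) * F j = c * \sum_(j < n) G j * F j.
Proof. by rewrite mulr_sumr; apply: eq_bigr => j _; rewrite mulrA. Qed.

Lemma sum_sub n (G H F : nat -> R) :
  \sum_(j < n) (G j - H j) * F j = \sum_(j < n) G j * F j - \sum_(j < n) H j * F j.
Proof. by rewrite -sumrB; apply: eq_bigr => j _; rewrite mulrBl. Qed.

Lemma clip_le (u v : \bar R) (a s : R) : u != +oo%E -> v != -oo%E ->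
  (u <= a%:E)%E -> (a%:E <= v)%E -> `|a - clip u v s| <= `|a - s|.
Proof.
move=> hu hv hua hav.
have hmin : forall b, a <= b -> `|a - Num.min s b| <= `|a - s|.
  move=> b hab; case: (lerP s b) => h //.
  rewrite !ler0_norm ?subr_le0 //; [lra|lra].
have hmax : forall c t, c <= a -> `|a - Num.max c t| <= `|a - t|.
  move=> c t hca; case: (lerP c t) => h //.
  rewrite !ger0_norm ?subr_ge0 //; [lra|lra].
rewrite /clip; move: hu hv hua hav.
case: u => [c| |] // _; case: v => [b| |] // _ hua hav.
- rewrite -EFin_min -EFin_max /=; rewrite !lee_fin in hua hav.
  exact: le_trans (hmax _ _ hua) (hmin _ hav).
- rewrite (@min_l _ _ s%:E) ?leey // -EFin_max /=; rewrite lee_fin in hua.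
  exact: hmax.
- rewrite -EFin_min (@max_r _ _ -oo%E) ?leNye //=; rewrite lee_fin in hav.
  exact: hmin.
- by rewrite (@min_l _ _ s%:E) ?leey // (@max_r _ _ -oo%E) ?leNye.
Qed.

End Helpers.


Section Net.
Variable R : realType.
Variables (d m LL : nat) (L : R) (y : nat -> 'rV[R]_d) (fy : nat -> R).

Definition yv r q := ext (fun j => y r ord0 j) q.

Definition Dw (k r j : nat) : R :=
  if k == 1%N then (((j < m * (2 * d)) && (j %/ (2 * d) == r))%N)%:R
  else ((j == 3 + r - k)%N)%:R.

Definition Sw (k j : nat) : R :=
  if k == 1%N then - L * Dw 1 0 j
  else if (k <= m)%N then ((j == 0)%N)%:R - ((j == 1)%N)%:R + ((j == 2)%N)%:R
  else ((j == 0)%N)%:R - ((j == 1)%N)%:R.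

Definition Sb (k : nat) : R := if k == 1%N then fy 0 else 0.

Definition W1 (i j : nat) : R :=
  if (i < m * (2 * d))%N then
    (if (i %% (2 * d) < d)%N then ((j == i %% (2 * d))%N)%:R
     else - ((j == i %% (2 * d) - d)%N)%:R)
  else 0.

Definition B1 (i : nat) : R :=
  if (i < m * (2 * d))%N then
    (if (i %% (2 * d) < d)%N then - yv (i %/ (2 * d))%N (i %% (2 * d))%N
     else yv (i %/ (2 * d))%N (i %% (2 * d) - d)%N)
  else 0.

Definition Wn (k i j : nat) : R :=
  if k == 1%N then W1 i j
  else if k == LL then (if i == 0%N then Sw k.-1 j else 0)
  else if (k <= m)%N then
    (if i == 0%N then - L * Dw k.-1 k.-1 j
     else if i == 1%N then - (- L * Dw k.-1 k.-1 j)
     else if i == 2%N then Sw k.-1 j - (- L * Dw k.-1 k.-1 j)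
     else if ((3 <= i) && (k + i - 3 < m))%N then Dw k.-1 (k + i - 3) j
     else 0)
  else (if i == 0%N then Sw k.-1 j else if i == 1%N then - Sw k.-1 j else 0).

Definition Bn (k i : nat) : R :=
  if k == 1%N then B1 i
  else if k == LL then (if i == 0%N then Sb k.-1 else 0)
  else if (k <= m)%N then
    (if i == 0%N then fy k.-1
     else if i == 1%N then - fy k.-1
     else if i == 2%N then Sb k.-1 - fy k.-1
     else 0)
  else (if i == 0%N then Sb k.-1 else if i == 1%N then - Sb k.-1 else 0).

Section Eval.
Variables (u v : \bar R) (x : 'rV[R]_d) (l : seq nat).
Hypothesis hd : (0 < d)%N.
Hypothesis hm2 : (2 <= m)%N.
Hypothesis hLL : (m + 1 <= LL)%N.
Hypothesis hsize : size l = LL.+1.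
Hypothesis hl0 : nth 0%N l 0 = d.
Hypothesis hlast : nth 0%N l LL = 1%N.
Hypothesis hl1 : (2 * d * m <= nth 0 l 1)%N.
Hypothesis hlk : forall k, (2 <= k <= m)%N -> (2 * m + 3 - 2 * k <= nth 0 l k)%N.
Hypothesis hli : forall i, (m < i < LL)%N -> (2 <= nth 0 l i)%N.
Hypothesis hL : 0 <= L.

Let X := ext (fun j => x ord0 j).
Definition dr r := dist1 x (y r).
Definition aa r := fy r - L * dr r.
Fixpoint smax k := if k is k'.+1 then Num.max (smax k') (aa k') else aa 0.
Let lw k := nth 0%N l k.
Definition Sval k (z : nat -> R) := \sum_(j < lw k) Sw k j * z j + Sb k.
Definition Dval k r (z : nat -> R) := \sum_(j < lw k) Dw k r j * z j.
Definition Inv k z := Sval k z = smax (minn k m) /\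
  forall r, (k <= r < m)%N -> Dval k r z = dr r.

Lemma dr_ge0 r : 0 <= dr r.
Proof. by rewrite /dr /dist1 sumr_ge0. Qed.

Lemma D1 r : (r < m)%N -> Dval 1 r (relu (lin Wn Bn 1 d X)) = dr r.
Proof.
move=> hr; rewrite /Dval /Dw /=.
rewrite (sum_block _ _ (2 * d)%N m _ r hr); last by rewrite mulnC.
have hlin : forall q, (q < 2 * d)%N -> lin Wn Bn 1 d X (r * (2 * d) + q)%N =
   if (q < d)%N then X q - yv r q else - X (q - d)%N + yv r (q - d)%N.
  move=> q hq; rewrite /lin /Wn /Bn /= /W1 /B1.
  have -> : (r * (2 * d) + q < m * (2 * d))%N.
    have : (r.+1 * (2 * d) <= m * (2 * d))%N by rewrite leq_mul2r hr orbT.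
    rewrite mulSn; lia.
  have -> : ((r * (2 * d) + q) %% (2 * d) = q)%N by rewrite modnMDl modn_small.
  have -> : ((r * (2 * d) + q) %/ (2 * d) = r)%N.
    by rewrite divnMDl ?divn_small ?addn0 //; lia.
  case: ifP => hqd.
    by rewrite sum_ind.
  under eq_bigr do rewrite mulNr.
  by rewrite sumrN sum_ind //; lia.
have e : (2 * d = d + d)%N by lia.
rewrite e big_split_ord /= -e.
rewrite /dr /dist1 -big_split /=; apply: eq_bigr => i _.
have hi := ltn_ord i.
rewrite /relu !hlin; [|lia|lia].
rewrite hi.
have -> : (d + i < d)%N = false by lia.
have -> : (d + i - d = i)%N by lia.
rewrite /X /yv !ext_ord -relu_abs; congr (_ + _); congr (Num.max _ _).
ring.
Qed.

Lemma smax1 : smax 1 = aa 0.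
Proof. by rewrite /= maxxx. Qed.

Lemma smaxS k : smax k.+1 = Num.max (smax k) (aa k).
Proof. by []. Qed.

Lemma inv1 : Inv 1 (relu (lin Wn Bn 1 d X)).
Proof.
split; last by move=> r /andP [_ hr]; exact: D1.
rewrite /Sval /Sw /Sb /= sum_scale.
have -> : (minn 1 m = 1)%N by lia.
rewrite smax1 -/(Dval 1 0 _) D1; last by lia.
rewrite /aa; ring.
Qed.

Lemma step k z : (1 <= k)%N -> (k.+1 < LL)%N -> Inv k z ->
  Inv k.+1 (relu (lin Wn Bn k.+1 (lw k) z)).
Proof.
move=> hk1 hkL [hS hD].
have hne1 : (k.+1 == 1%N) = false by lia.
have hneL : (k.+1 == LL) = false by lia.
case: (ltnP k m) => hkm.
- have hkm' : (k.+1 <= m)%N by [].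
  have l0 : lin Wn Bn k.+1 (lw k) z 0 = aa k.
    rewrite /lin /Wn /Bn hne1 hneL hkm' /= sum_scale -/(Dval k k z) hD; last by lia.
    rewrite /aa; ring.
  have l1 : lin Wn Bn k.+1 (lw k) z 1 = - aa k.
    rewrite -l0 /lin /Wn /Bn hne1 hneL hkm' /=.
    under eq_bigr do rewrite mulNr.
    by rewrite sumrN opprD.
  have l2 : lin Wn Bn k.+1 (lw k) z 2 = Sval k z - aa k.
    rewrite -l0 /lin /Wn /Bn hne1 hneL hkm' /=.
    rewrite (sum_sub _ _ (Sw k) (fun j => - L * Dw k k j) z) /Sval; ring.
  have l3 : forall r, (k < r < m)%N -> lin Wn Bn k.+1 (lw k) z (3 + r - k.+1) = dr r.
    move=> r hr; rewrite /lin /Wn /Bn hne1 hneL hkm' /=.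
    have -> : (3 + r - k.+1 == 0)%N = false by lia.
    have -> : (3 + r - k.+1 == 1)%N = false by lia.
    have -> : (3 + r - k.+1 == 2)%N = false by lia.
    have -> : ((3 <= 3 + r - k.+1) && (k.+1 + (3 + r - k.+1) - 3 < m))%N by lia.
    have -> : (k.+1 + (3 + r - k.+1) - 3 = r)%N by lia.
    by rewrite addr0 -/(Dval k r z) hD //; lia.
  have hw : (2 * m + 3 - 2 * k.+1 <= lw k.+1)%N by apply: hlk; lia.
  split.
    rewrite /Sval /Sw /Sb hne1 hkm' /= sum3; last by lia.
    rewrite /relu l0 l1 l2 addr0 relu_diff hS.
    have -> : (minn k m = k)%N by lia.
    have -> : (minn k.+1 m = k.+1)%N by lia.
    by rewrite smaxS max_shift.
  move=> r hr; rewrite /Dval /Dw hne1 sum_ind; last by lia.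
  by rewrite /relu l3 ?relu_pos ?dr_ge0 //; lia.
- have hkm' : (k.+1 <= m)%N = false by lia.
  have l0 : lin Wn Bn k.+1 (lw k) z 0 = Sval k z.
    by rewrite /lin /Wn /Bn hne1 hneL hkm' /=.
  have l1 : lin Wn Bn k.+1 (lw k) z 1 = - Sval k z.
    rewrite -l0 /lin /Wn /Bn hne1 hneL hkm' /=.
    under eq_bigr do rewrite mulNr.
    by rewrite sumrN opprD.
  split; last by move=> r; lia.
  rewrite /Sval /Sw /Sb hne1 hkm' /= sum2; last by apply: hli; lia.
  rewrite /relu l0 l1 addr0 relu_diff hS.
  have -> : (minn k m = m)%N by lia.
  by have -> : (minn k.+1 m = m)%N by lia.
Qed.

Lemma run n : forall k z, (k + n)%N = LL.-1 -> (1 <= k)%N -> Inv k z ->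
  neval u v Wn Bn k.+1 (lw k) (drop k.+1 l) z 0 = clip u v (smax m).
Proof.
elim: n => [|n IH] k z hkn hk hI.
  rewrite (drop_nth 0%N); last by rewrite hsize; lia.
  rewrite drop_oversize; last by rewrite hsize; lia.
  have -> : (nth 0 l k.+1 = 1)%N by rewrite -hlast; congr nth; lia.
  rewrite /= /lin /Wn /Bn.
  have -> : (k.+1 == 1%N) = false by lia.
  have -> : (k.+1 == LL) by lia.
  rewrite /= -/(Sval k z) (proj1 hI).
  by have -> : (minn k m = m)%N by lia.
rewrite (drop_nth 0%N); last by rewrite hsize; lia.
rewrite (drop_nth 0%N); last by rewrite hsize; lia.
rewrite eval_cons2 -(drop_nth 0%N); last by rewrite hsize; lia.
apply: IH; [lia|lia|].
by apply: step => //; lia.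
Qed.

Lemma real_eq dd (th : 'I_dd -> R) :
  (forall p : 'I_dd, th p = mkth Wn Bn 1 d (behead l) p) ->
  (psize d (behead l) <= dd)%N ->
  realization th l u v x = clip u v (smax m).
Proof.
move=> hth hps.
have hl : l = d :: behead l.
  by case: l hsize hl0 => [//|a r] /= _ ->.
rewrite /realization hl.
rewrite (@layers_eval R u v Wn Bn _ 0%N 1%N); first last.
- have : last 0%N l = 1%N by rewrite -nth_last hsize hlast.
  by rewrite {1}hl /= => ->.
- move=> p; rewrite add0n /ext; case: insubP => [i _ <-|hn] /=.
    by rewrite hth.
  by rewrite mkth_beyond // (leq_trans hps) // leqNgt.
have e1 : behead l = drop 1 l by rewrite drop1.
rewrite e1 (drop_nth 0%N); last by rewrite hsize; lia.
rewrite (drop_nth 0%N); last by rewrite hsize; lia.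
rewrite eval_cons2 -(drop_nth 0%N); last by rewrite hsize; lia.
apply: (run (LL.-1 - 1)%N); [lia|lia|].
exact: inv1.
Qed.

End Eval.
Section Bound.
Variable C : R.
Hypothesis hC1 : 1 <= C.
Hypothesis hLC : L <= C.
Hypothesis hL0 : 0 <= L.
Hypothesis hm2 : (2 <= m)%N.
Hypothesis hy : forall r q, (r < m)%N -> `|yv r q| <= C.
Hypothesis hf : forall r, (r < m)%N -> 2 * `|fy r| <= C.

Local Ltac lra' := move: (hC1) (hLC) (hL0) => ? ? ?; lra.

Lemma Dw_bool k r j : exists b : bool, Dw k r j = b%:R.
Proof. by rewrite /Dw; case: ifP => _; eexists. Qed.

Lemma bool_le1 (b : bool) : `|(b%:R : R)| <= C.
Proof. by case: b; rewrite ?mulr1n ?mulr0n ?normr1 ?normr0 //; lra'. Qed.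

Lemma LDw k r j : `|- L * Dw k r j| <= C.
Proof.
have [b ->] := Dw_bool k r j.
by case: b; rewrite ?mulr1n ?mulr0n ?mulr1 ?mulr0 ?normrN ?normr0 ?ger0_norm //; lra'.
Qed.

Lemma Sw_bound k j : `|Sw k j| <= C.
Proof.
rewrite /Sw; case: ifP => _; first exact: LDw.
by case: ifP => _; case: j => [|[|[|j]]] /=;
  rewrite ?mulr1n ?mulr0n ?subr0 ?addr0 ?sub0r ?add0r ?normrN ?normr1 ?normr0 //; lra'.
Qed.

Lemma Sdiff_bound k j : `|Sw k j - (- L * Dw k k j)| <= C.
Proof.
case: (eqVneq k 1%N) => [->|hk].
  rewrite /Sw eqxx.
  have [a ->] := Dw_bool 1 0 j; have [b ->] := Dw_bool 1 1 j.
  by case: a; case: b; rewrite ?mulr1n ?mulr0n ?mulr1 ?mulr0 ?subrr ?opprK ?subr0 ?sub0r ?normr0 ?normrN ?ger0_norm //;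
    lra'.
have -> : Dw k k j = ((j == 3)%N)%:R by rewrite /Dw (negbTE hk) addnK.
rewrite /Sw (negbTE hk).
by case: ifP => _; case: j => [|[|[|[|j]]]] /=;
  rewrite ?mulr1n ?mulr0n ?mulr1 ?mulr0 ?opprK ?subr0 ?addr0 ?sub0r ?add0r ?normrN ?normr1 ?normr0 ?ger0_norm //;
  try lra'; rewrite ger0_norm; lra'.
Qed.

Lemma W_bound k i j : `|Wn k i j| <= C.
Proof.
rewrite /Wn; case: ifP => _.
  rewrite /W1; case: ifP => _; last by rewrite normr0; lra'.
  by case: ifP => _; rewrite ?mulr1n ?mulr0n ?normrN bool_le1.
case: ifP => _.
  by case: ifP => _; [exact: Sw_bound|rewrite normr0; lra'].
case: ifP => _.
  case: ifP => _; first exact: LDw.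
  case: ifP => _; first by rewrite normrN LDw.
  case: ifP => _; first exact: Sdiff_bound.
  case: ifP => _; last by rewrite normr0; lra'.
  by have [b ->] := Dw_bool k.-1 (k + i - 3) j; rewrite bool_le1.
case: ifP => _; first exact: Sw_bound.
by case: ifP => _; rewrite ?mulr1n ?mulr0n ?normrN ?Sw_bound // normr0; lra'.
Qed.

Lemma f_le r : (r < m)%N -> `|fy r| <= C.
Proof. move=> /hf; have := normr_ge0 (fy r); lra'. Qed.

Lemma Sb_bound k : `|Sb k| <= C.
Proof.
rewrite /Sb; case: ifP => _; last by rewrite normr0; lra'.
by apply: f_le; lia.
Qed.

Lemma B_bound k i : `|Bn k i| <= C.
Proof.
rewrite /Bn; case: ifP => _.
  rewrite /B1; case: ifP => hi; last by rewrite normr0; lra'.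
  have hr : (i %/ (2 * d) < m)%N.
    case: (posnP d) => hd0; first by move: hi; rewrite hd0 !muln0 ltn0.
    by rewrite ltn_divLR //; lia.
  by case: ifP => _; rewrite ?mulr1n ?mulr0n ?normrN hy.
case: ifP => _.
  by case: ifP => _; [exact: Sb_bound|rewrite normr0; lra'].
case: ifP => hkm.
  case: ifP => _; first by apply: f_le; lia.
  case: ifP => _; first by rewrite normrN; apply: f_le; lia.
  case: ifP => _; last by rewrite normr0; lra'.
  rewrite /Sb; case: ifP => /eqP hk1.
    rewrite hk1.
    have h0 : 2 * `|fy 0| <= C by apply: hf; lia.
    have h1 : 2 * `|fy 1| <= C by apply: hf; lia.
    have := ler_normB (fy 0) (fy 1%N); move: h0 h1; lra'.
  by rewrite sub0r normrN; apply: f_le; lia.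
case: ifP => _; first exact: Sb_bound.
by case: ifP => _; rewrite ?mulr1n ?mulr0n ?normrN ?Sb_bound // normr0; lra'.
Qed.

End Bound.
End Net.

Arguments aa {R d}. Arguments smax {R d}. Arguments dr {R d}.

Lemma smax_le (R : realType) d L y fy (x : 'rV[R]_d) (c : R) m : (0 < m)%N ->
  (forall r, (r < m)%N -> aa L y fy x r <= c) ->
  forall k, (k <= m)%N -> smax L y fy x k <= c.
Proof.
move=> hm h; elim=> [|k IH] hk /=; first exact: h.
by rewrite ge_max IH ?h //; lia.
Qed.

Lemma smax_ge (R : realType) d L y fy (x : 'rV[R]_d) r k : (r < k)%N ->
  aa L y fy x r <= smax L y fy x k.
Proof.
elim: k => [//|k IH] hr /=; rewrite le_max.
case: (ltngtP r k) => h; first by rewrite IH.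
  lia.
by rewrite h lexx orbT.
Qed.


Theorem corollary3p8 (R : realType) (d dd LL : nat) (L : R) (u v : \bar R)
  (D : set 'rV[R]_d) (f : 'rV[R]_d -> R) (M : seq 'rV[R]_d) (l : seq nat) :
  (0 < d)%N -> (0 < dd)%N -> (0 < LL)%N ->
  u != +oo%E -> v != -oo%E -> (u < v)%E ->
  (forall x, D x -> (u <= (f x)%:E <= v)%E) ->
  (forall x y, D x -> D y -> `|f x - f y| <= L * dist1 x y) ->
  uniq M -> (2 <= size M)%N -> (forall z, z \in M -> D z) ->
  size l = LL.+1 -> all (fun n => 0 < n)%N l ->
  (size M + 1 <= LL)%N ->
  (\sum_(1 <= i < LL.+1) nth 0 l i * (nth 0 l i.-1 + 1) <= dd)%N ->
  nth 0%N l 0 = d -> nth 0%N l LL = 1%N ->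
  (2 * d * size M <= nth 0 l 1)%N ->
  (forall k, (2 <= k <= size M)%N -> (2 * size M + 3 - 2 * k <= nth 0 l k)%N) ->
  (forall i, (size M < i < LL)%N -> (2 <= nth 0 l i)%N) ->
  exists th : 'I_dd -> R,
    ((\big[Num.max/0]_(i < dd) `|th i|)%:E <=
       Order.max 1%E (Order.max L%:E
         (Order.max (ereal_sup [set (normInf z)%:E | z in [set` M]])
            (2%:E * ereal_sup [set (`|f z|)%:E | z in [set` M]]))))%E /\
    (ereal_sup [set (`|f x - realization th l u v x|)%:E | x in D] <=
       (2 * L)%:E * ereal_sup [set ereal_inf [set (dist1 x y)%:E | y in [set` M]]
                               | x in D])%E.
Proof.
move=> hd hdd hLL0 hu hv huv hfD hLip hM hM2 hMD hsize hpos hLLm hsum hl0 hlast hl1 hlk hli.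
move Em: (size M) => m in hM2 hLLm hl1 hlk hli *.
have hm0 : (0 < m)%N by apply: ltn_trans hM2.
pose y r := nth 0 M r.
pose fy r := f (y r).
have hyM : forall r, (r < m)%N -> y r \in M by move=> r hr; apply: mem_nth; rewrite Em.
have hdistC : forall a b : 'rV[R]_d, dist1 a b = dist1 b a.
  by move=> a b; rewrite /dist1; apply: eq_bigr => i _; rewrite distrC.
have hL : 0 <= L.
  have hne : y 0%N != y 1%N by rewrite /y nth_uniq // ?Em; lia.
  case: (boolP [exists i, y 0%N ord0 i != y 1%N ord0 i]) => [/existsP [i hi] | /existsPn hall]; last first.
    exfalso; move/negP: hne; apply; apply/eqP/rowP => i; apply/eqP.
    by move: (hall i); rewrite negbK.
  have hp : 0 < dist1 (y 0%N) (y 1%N).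
    rewrite /dist1 (bigD1 i) //=.
    have h1 : 0 < `|y 0%N ord0 i - y 1%N ord0 i| by rewrite normr_gt0 subr_eq0.
    have h2 : 0 <= \sum_(j < d | j != i) `|y 0%N ord0 j - y 1%N ord0 j| by apply: sumr_ge0.
    lra.
  have := hLip (y 0%N) (y 1%N) (hMD _ (hyM 0%N ltac:(lia))) (hMD _ (hyM 1%N ltac:(lia))).
  have := normr_ge0 (f (y 0%N) - f (y 1%N)).
  case: (lerP 0 L) => // hLn.
  have : L * dist1 (y 0%N) (y 1%N) < 0 by rewrite pmulr_llt0.
  lra.
pose Ym := \big[Num.max/0]_(r < m) normInf (y r).
pose Fm := \big[Num.max/0]_(r < m) `|fy r|.
pose C := Num.max 1 (Num.max L (Num.max Ym (2 * Fm))).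
have hC1 : 1 <= C by rewrite le_max lexx.
have hLC : L <= C by rewrite /C le_max (le_max L) lexx orbT.
have hYC : Ym <= C by rewrite /C !le_max lexx !orbT.
have hFC : 2 * Fm <= C by rewrite /C !le_max lexx !orbT.
have hy : forall r q, (r < m)%N -> `|@yv R d y r q| <= C.
  move=> r q hr; rewrite /yv /ext; case: insubP => [i _ _|_] /=; last by rewrite normr0; lra.
  apply: le_trans hYC; apply: (@le_trans _ _ (normInf (y r))).
    by rewrite /normInf; exact: (le_bigmax _ (fun i => `|y r ord0 i|) i).
  by rewrite /Ym; exact: (le_bigmax _ (fun r : 'I_m => normInf (y r)) (Ordinal hr)).
have hf : forall r, (r < m)%N -> 2 * `|fy r| <= C.
  move=> r hr; apply: le_trans hFC; rewrite ler_pM2l //.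
  by rewrite /Fm; exact: (le_bigmax _ (fun r : 'I_m => `|fy r|) (Ordinal hr)).
pose th := fun p : 'I_dd => mkth (@Wn R d m LL L) (@Bn R d m LL y fy) 1 d (behead l) p.
have hps : (psize d (behead l) <= dd)%N.
  have := @psize_sum l LL 0%N; rewrite hsize => /(_ erefl).
  by rewrite hl0 drop1 => ->.
exists th; split.
  have hthC : \big[Num.max/0]_(i < dd) `|th i| <= C.
    apply: bigmax_le; first lra.
    move=> i _; rewrite /th.
    apply: (@mkth_prop R (fun t => `|t| <= C)).
    - exact: W_bound.
    - exact: (@B_bound R d m LL L y fy C hC1 hLC hL hM2 hy hf).
    - by rewrite normr0; lra.
  apply: (@le_trans _ _ C%:E); first by rewrite lee_fin.
  rewrite /C !EFin_max; apply: le_max2 => //; apply: le_max2 => //.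
  have hN0 : forall r, 0 <= normInf (y r).
    move=> r; rewrite /normInf; apply: (big_ind (fun t => 0 <= t)) => //.
    by move=> a b ha hb; rewrite le_max ha.
  have hS1 : forall r, (r < m)%N -> ((normInf (y r))%:E <= ereal_sup [set (normInf z)%:E | z in [set` M]])%E.
    by move=> r hr; apply: ereal_sup_ubound; exists (y r) => //=; exact: hyM.
  have hS2 : forall r, (r < m)%N -> ((`|fy r|)%:E <= ereal_sup [set (`|f z|)%:E | z in [set` M]])%E.
    by move=> r hr; apply: ereal_sup_ubound; exists (y r) => //=; exact: hyM.
  apply: le_max2.
    rewrite /Ym; apply: (big_ind (fun t : R => (t%:E <= _)%E)).
    - by apply: le_trans (hS1 0%N hm0); rewrite lee_fin; exact: hN0.
    - by move=> a b ha hb; rewrite EFin_max ge_max ha hb.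
    - by move=> r _; apply: hS1.
  rewrite EFinM; apply: lee_wpmul2l; first by rewrite lee_fin.
  rewrite /Fm; apply: (big_ind (fun t : R => (t%:E <= _)%E)).
  - by apply: le_trans (hS2 0%N hm0); rewrite lee_fin.
  - by move=> a b ha hb; rewrite EFin_max ge_max ha hb.
  - by move=> r _; apply: hS2.
apply: ge_ereal_sup => _ [x Dx <-].
rewrite (@real_eq R d m LL L y fy u v x l hd hM2 hLLm hsize hl0 hlast hl1 hlk hli hL dd th) //.
set s := smax L y fy x m.
have haa : forall r, (r < m)%N -> aa L y fy x r <= f x.
  move=> r hr; rewrite /aa /dr.
  have := hLip (y r) x (hMD _ (hyM r hr)) Dx; rewrite hdistC.
  have := ler_norm (fy r - f x); rewrite /fy; lra.
have hs1 : s <= f x by apply: (@smax_le R d L y fy x (f x) m hm0 haa m).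
have hbound : forall r, (r < m)%N -> `|f x - s| <= 2 * L * dist1 x (y r).
  move=> r hr; have := @smax_ge R d L y fy x r m hr; rewrite -/s.
  have := hLip x (y r) Dx (hMD _ (hyM r hr)).
  have := ler_norm (f x - fy r).
  rewrite [`|f x - s|]ger0_norm ?subr_ge0 // /aa /dr /fy -mulrA; lra.
have hclip : `|f x - clip u v s| <= `|f x - s|.
  by case/andP: (hfD x Dx) => h1 h2; apply: clip_le.
apply: (@le_trans _ _ ((2 * L)%:E * ereal_inf [set (dist1 x z)%:E | z in [set` M]])%E); last first.
  apply: lee_wpmul2l; first by rewrite lee_fin mulr_ge0.
  by apply: ereal_sup_ubound; exists x.
case: (eqVneq L 0) => [L0|Lne].
  rewrite L0 mulr0 mul0e lee_fin; apply: le_trans hclip _.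
  by have := hbound 0%N hm0; rewrite L0 mulr0 mul0r.
have hLp : 0 < L by rewrite lt_def Lne hL.
have h2L : 0 < 2 * L by rewrite mulr_gt0.
set t := `|f x - clip u v s|.
have -> : t%:E = ((2 * L)%:E * (t / (2 * L))%:E)%E.
  by rewrite -EFinM; congr EFin; field; rewrite gt_eqF.
apply: lee_wpmul2l; first by rewrite lee_fin ltW.
apply: le_ereal_inf_tmp => _ [z zM <-].
rewrite lee_fin ler_pdivrMr //.
have hz : z = y (index z M) by rewrite /y nth_index.
have hr : (index z M < m)%N by rewrite -Em index_mem.
rewrite hz; apply: le_trans hclip _; apply: le_trans (hbound _ hr) _.
by rewrite mulrC.
Qed.
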